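(* Consider the double integrator $\dot x_1=x_2$, $\dot x_2=u$ with $u\in U=[-1,1]$ and $Q=[-1,1]^2$, using the $\infty$-norm. Then $Q$ is not controlled invariant, and not controlled $\tau$-recurrent for any $\tau<2$, so $h_{\mathrm{inv}}(Q)=+\infty$ and $h_{\mathrm{rec}}(\tau,Q)=+\infty$ for $\tau<2$; moreover $Q$ is controlled $2$-recurrent and $h_{\mathrm{rec}}(\tau,Q)\le 2/\ln 2$ for all $\tau\ge2$.
   Context: Controls are piecewise continuous functions $\mathbb R_{\ge0}\to U$; $\xi(x,u,t)$ the solution; $N_\varepsilon(Q)=\{y:\exists x\in Q,\|x-y\|_\infty\le\varepsilon\}$; $\log$ base 2. Controlled invariant: for each $x\in Q$ some $u$ keeps $\xi(x,u,t)\in Q$ for all $t\ge0$. Controlled $\tau$-recurrent: for each $x\in Q$ some $u$ satisfies: for all $t\ge0$ there is $t'\in[t,t+\tau]$ with $\xi(x,u,t')\in Q$. A trajectory is $(T,\varepsilon,\tau,Q)$-recurrent if for every $t\in[0,T-\tau]$ there is $t'\in[t,t+\tau]$ with $\xi(x,u,t')\in N_\varepsilon(Q)$; $r_{\mathrm{rec}}(T,\varepsilon,\tau,Q)$ is the minimal cardinality of a set $S$ of controls such that every $x\in Q$ has some $u\in S$ making $\xi(x,u,\cdot)$ $(T,\varepsilon,\tau,Q)$-recurrent ($\infty$ if none), and $h_{\mathrm{rec}}(\tau,Q)=\lim_{\varepsilon\searrow0}\limsup_{T\to\infty}\frac1T\log r_{\mathrm{rec}}(T,\varepsilon,\tau,Q)$.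 Invariance entropy $h_{\mathrm{inv}}(Q)$ is defined analogously with the requirement $\xi(x,u,t)\in N_\varepsilon(Q)$ for all $t\in[0,T]$. *)

(* Defs.v *)
From mathcomp Require Import all_boot all_order all_algebra.
From mathcomp Require Import all_classical all_reals all_analysis.
Set Implicit Arguments. Unset Strict Implicit. Unset Printing Implicit Defensive.
Import Order.TTheory GRing.Theory Num.Theory.
Import numFieldNormedType.Exports.
Local Open Scope classical_set_scope.
Local Open Scope ring_scope.

Definition piecewise_continuous (R : realType) (u : R -> R) : Prop :=
  forall T : R, exists (n : nat) (tp : nat -> R),
    [/\ tp 0%N = 0, T <= tp n,
        (forall i, (i < n)%N -> tp i < tp i.+1) &
        (forall i, (i < n)%N -> exists g : R -> R, continuous g /\
            (forall s, tp i < s < tp i.+1 -> u s = g s))].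

Definition admissible (R : realType) (u : R -> R) : Prop :=
  piecewise_continuous u /\ (forall t, 0 <= t -> -1 <= u t <= 1).

Definition xi2 (R : realType) (x : R * R) (u : R -> R) (t : R) : R :=
  x.2 + \int[(@lebesgue_measure R)]_(s in `[0, t]) u s.

Definition xi (R : realType) (x : R * R) (u : R -> R) (t : R) : R * R :=
  (x.1 + \int[(@lebesgue_measure R)]_(s in `[0, t]) xi2 x u s, xi2 x u t).

Definition Neps (R : realType) (eps : R) (Q : set (R * R)) : set (R * R) :=
  [set y | exists2 x, Q x & Num.max `|x.1 - y.1| `|x.2 - y.2| <= eps].

Definition controlled_invariant (R : realType) (Q : set (R * R)) : Prop :=
  forall x, Q x -> exists u, admissible u /\
    forall t, 0 <= t -> Q (xi x u t).

Definition controlled_recurrent (R : realType) (tau : R) (Q : set (R * R))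
  : Prop :=
  forall x, Q x -> exists u, admissible u /\
    forall t, 0 <= t -> exists t', t <= t' <= t + tau /\ Q (xi x u t').

Definition rec_traj (R : realType) (T eps tau : R) (Q : set (R * R))
  (x : R * R) (u : R -> R) : Prop :=
  forall t, 0 <= t <= T - tau ->
    exists t', t <= t' <= t + tau /\ Neps eps Q (xi x u t').

Definition inv_traj (R : realType) (T eps : R) (Q : set (R * R))
  (x : R * R) (u : R -> R) : Prop :=
  forall t, 0 <= t <= T -> Neps eps Q (xi x u t).

(* minimal cardinality of a set S of controls such that every x in Q   *)
(* has some u in S with P x u (+oo if there is no such finite set);    *)
(* a set of n controls is listed as F 0, ..., F (n-1).                 *)
Definition min_spanning (R : realType) (Q : set (R * R))
  (P : R * R -> (R -> R) -> Prop) : \bar R :=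
  ereal_inf [set (n%:R)%:E | n in
    [set n : nat | exists F : nat -> R -> R,
       (forall i, (i < n)%N -> admissible (F i)) /\
       (forall x, Q x -> exists2 i, (i < n)%N & P x (F i))]].

Definition r_rec (R : realType) (T eps tau : R) (Q : set (R * R)) : \bar R :=
  min_spanning Q (rec_traj T eps tau Q).

Definition r_inv (R : realType) (T eps : R) (Q : set (R * R)) : \bar R :=
  min_spanning Q (inv_traj T eps Q).

Definition elog2 (R : realType) (r : \bar R) : \bar R :=
  match r with
  | r'%:E => (ln r' / ln 2)%:E
  | +oo%E => +oo%E
  | -oo%E => -oo%E
  end.

Definition entropy_of (R : realType) (r : R -> R -> \bar R) : \bar R :=
  lim ((fun eps : R =>
          limf_esup (fun T : R => ((T^-1)%:E * elog2 (r T eps))%E)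
                    (pinfty_nbhs R))
       @ 0^'+).

Definition h_rec (R : realType) (tau : R) (Q : set (R * R)) : \bar R :=
  entropy_of (fun T eps => r_rec T eps tau Q).

Definition h_inv (R : realType) (Q : set (R * R)) : \bar R :=
  entropy_of (fun T eps => r_inv T eps Q).

Definition Qsq (R : realType) : set (R * R) :=
  [set x | -1 <= x.1 <= 1 /\ -1 <= x.2 <= 1].

(* Main.v *)
Require Import Defs.
From mathcomp Require Import all_boot all_order all_algebra.
From mathcomp Require Import all_classical all_reals all_analysis.
From mathcomp Require Import ring lra zify.
Set Implicit Arguments. Unset Strict Implicit. Unset Printing Implicit Defensive.
Import Order.TTheory GRing.Theory Num.Theory.
Import numFieldNormedType.Exports.
Local Open Scope classical_set_scope.
Local Open Scope ring_scope.
Section S0.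
Context {R : realType}.
Notation mu := (@lebesgue_measure R).

Lemma pc_meas (u : R -> R) : piecewise_continuous u -> forall T : R, measurable_fun `[0, T] u.
Proof.
move=> pcu T; have [n [tp [tp0 Ttp tpinc tpc]]] := pcu T.
have key : forall k, (k <= n)%N -> measurable_fun `[0, tp k] u.
  elim=> [|k IH] kn.
    by rewrite tp0 set_itv1; exact: measurable_fun_set1.
  have kn' : (k < n)%N by [].
  have [g [cg eg]] := tpc k kn'.
  apply: (@measurable_funS _ _ _ _ (`[0, tp k] `|` `]tp k, tp k.+1[ `|` [set tp k.+1])).
  - by apply: measurableU => //; apply: measurableU.
  - move=> s /=; rewrite in_itv/= => /andP[s0 s1].
    have [sk|ks] := leP s (tp k); first by left; left; rewrite in_itv/= s0 sk.
    have [sk1|ks1] := ltP s (tp k.+1); first by left; right; rewrite in_itv/= ks sk1.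
    by right; apply/eqP; rewrite eq_le s1 ks1.
  - apply/measurable_funU => //; first by apply: measurableU.
    split; last exact: measurable_fun_set1.
    apply/measurable_funU => //; split; first by apply: IH; exact: ltnW.
    apply: (@eq_measurable_fun _ _ _ _ _ g).
      by move=> s; rewrite inE/= in_itv/= => /eg ->.
    apply: measurable_funS (measurable_realfun.continuous_measurable_fun cg) => //.
apply: measurable_funS (key n (leqnn n)) => //.
move=> s /=; rewrite !in_itv/= => /andP[-> sT]; exact: le_trans sT Ttp.
Qed.

Lemma mu_cc (c d : R) : c <= d -> fine (mu `[c, d]) = d - c.
Proof.
rewrite le_eqVlt => /predU1P[->|cd]; rewrite lebesgue_measure_itv/= lte_fin ?ltxx ?subrr//.
by rewrite cd -EFinB.
Qed.

Lemma mu_oc (c d : R) : c <= d -> fine (mu `]c, d]) = d - c.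
Proof.
rewrite le_eqVlt => /predU1P[->|cd]; rewrite lebesgue_measure_itv/= lte_fin ?ltxx ?subrr//.
by rewrite cd -EFinB.
Qed.

Lemma adm_int (u : R -> R) (T : R) : admissible u -> mu.-integrable `[0, T] (EFin \o u).
Proof.
move=> [pcu bu]; apply: measurable_bounded_integrable => //.
- by apply: compact_finite_measure; exact: segment_compact.
- exact: (pc_meas pcu).
- exists 1; split; rewrite ?num_real // => M M1 s.
  rewrite /= in_itv/= => /andP[s0 _]; have := bu s s0.
  rewrite ler_norml => /andP[h1 h2]; apply/andP; split; lra.
Qed.

Lemma int_bnd (u : R -> R) (t : R) : admissible u -> 0 <= t ->
  - t <= \int[mu]_(s in `[0, t]) u s <= t.
Proof.
move=> au t0; have iu := adm_int t au.
have ic : forall c : R, mu.-integrable `[0, t] (EFin \o (fun _ => c)).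
  by move=> c; apply: continuous_compact_integrable; [exact: segment_compact|apply: continuous_subspaceT => ? ; exact: cvg_cst].
apply/andP; split.
  apply: le_trans (le_Rintegral _ (ic (-1)) iu _) => //.
    by rewrite Rintegral_cst// mu_cc// subr0; lra.
  by move=> s; rewrite /= in_itv/= => /andP[s0 _]; case: au => _ /(_ s s0)/andP[].
apply: le_trans (le_Rintegral _ iu (ic 1) _) _ => //.
  by move=> s; rewrite /= in_itv/= => /andP[s0 _]; case: au => _ /(_ s s0)/andP[].
by rewrite Rintegral_cst// mu_cc// subr0; lra.
Qed.

Lemma xi2_int (x : R * R) (u : R -> R) (T : R) : admissible u -> 0 <= T ->
  mu.-integrable `[0, T] (EFin \o xi2 x u).
Proof.
move=> au T0; apply: measurable_bounded_integrable => //.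
- by apply: compact_finite_measure; exact: segment_compact.
- apply: measurable_realfun.measurable_funD => //.
  apply: measurable_realfun.subspace_continuous_measurable_fun => //.
  exact: (parameterized_integral_continuous T0 (adm_int T au)).
- exists (`|x.2| + T); split; rewrite ?num_real // => M M1 s.
  rewrite /= in_itv/= => /andP[s0 sT]; have := int_bnd au s0.
  move=> /andP[h1 h2]; apply: (le_trans _ (ltW M1)); rewrite /xi2.
  apply: (le_trans (ler_normD _ _)); rewrite lerD2l ler_norml; lra.
Qed.
Lemma int_lin (c d al be : R) : c <= d ->
  \int[mu]_(s in `[c, d]) (al + be * s) = al * (d - c) + be * (d ^+ 2 - c ^+ 2) / 2.
Proof.
rewrite le_eqVlt => /predU1P[<-|cd].
  by rewrite set_itv1 Rintegral_set1 !subrr; lra.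
rewrite /Rintegral (@continuous_FTC2 _ _ (fun s => al * s + be * s ^+ 2 / 2))//.
- rewrite -EFinB /=; lra.
- apply: continuous_in_subspaceT => x _.
  by apply: continuousD; [exact: cvg_cst|apply: continuousM; [exact: cvg_cst|exact: cvg_id]].
- have dF : forall x, derivable (fun s : R => al * s + be * s ^+ 2 / 2) x 1 by move=> x; apply: ex_derive.
  split.
  + by move=> x _; exact: dF.
  + apply: cvg_at_right_filter. have h := differentiable_continuous (proj1 (derivable1_diffP _ _) (dF c)); exact: h.
  + apply: cvg_at_left_filter. have h := differentiable_continuous (proj1 (derivable1_diffP _ _) (dF d)); exact: h.

- move=> x _; rewrite /=; rewrite derive1E derive_val /= !scaler0 add0r. have sc : forall a b : R, a *: b = a * b by []. rewrite !sc !mulr1. lra.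
Qed.

Lemma cst_int (c T : R) : mu.-integrable `[0, T] (EFin \o (fun _ => c)).
Proof. by apply: continuous_compact_integrable; [exact: segment_compact|apply: continuous_subspaceT => ? ; exact: cvg_cst]. Qed.

Lemma lin_int (c d al be : R) : mu.-integrable `[c, d] (EFin \o (fun s => al + be * s)).
Proof.
apply: continuous_compact_integrable; first exact: segment_compact.
apply: continuous_subspaceT => ?.
by apply: continuousD; [exact: cvg_cst|apply: continuousM; [exact: cvg_cst|exact: cvg_id]].
Qed.

Lemma xi1_lb (x : R * R) (u : R -> R) (t : R) : admissible u -> 0 <= t ->
  x.1 + x.2 * t - t ^+ 2 / 2 <= (xi x u t).1.
Proof.
move=> au t0; rewrite /xi /=.
have -> : x.1 + x.2 * t - t ^+ 2 / 2 = x.1 + \int[mu]_(s in `[0, t]) (x.2 + (-1) * s).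
  by rewrite int_lin//; lra.
rewrite lerD2l; apply: le_Rintegral => //; first exact: lin_int.
  exact: xi2_int.
move=> s; rewrite /= in_itv/= => /andP[s0 _]; rewrite /xi2.
have := int_bnd au s0; move=> /andP[h1 _]; lra.
Qed.

Lemma xi_shift (x p : R * R) (u : R -> R) (t : R) : admissible u -> 0 <= t ->
  xi x u t = ((xi p u t).1 + (x.1 - p.1) + (x.2 - p.2) * t, (xi p u t).2 + (x.2 - p.2)).
Proof.
move=> au t0; rewrite /xi /=; congr (_, _); last by rewrite /xi2; ring.
have -> : \int[mu]_(s in `[0, t]) xi2 x u s = \int[mu]_(s in `[0, t]) (xi2 p u s + (x.2 - p.2)).
  by apply: eq_Rintegral => s _; rewrite /xi2; ring.
rewrite RintegralD//; [|exact: xi2_int|exact: cst_int].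
by rewrite Rintegral_cst// mu_cc// subr0; ring.
Qed.
End S0.

Section S1.
Context {R : realType}.
Notation mu := (@lebesgue_measure R).

Definition ctl (sg t1 t2 : R) : R -> R :=
  fun s => if s <= t1 then - sg else if s <= t2 then sg else 0.

Lemma pc_of (u : R -> R) : (forall T, exists (n : nat) (tp c : nat -> R),
  [/\ tp 0%N = 0, T <= tp n, (forall i, (i < n)%N -> tp i < tp i.+1) &
     (forall i, (i < n)%N -> forall s, tp i < s < tp i.+1 -> u s = c i)]) ->
  piecewise_continuous u.
Proof.
move=> H T; have [n [tp [c [h1 h2 h3 h4]]]] := H T.
exists n, tp; split => // i ni; exists (fun _ => c i); split; first by move=> ?; exact: cvg_cst.
exact: h4.
Qed.

Lemma ctl_adm (sg t1 t2 : R) : -1 <= sg <= 1 -> 0 <= t1 -> t1 <= t2 -> admissible (ctl sg t1 t2).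
Proof.
move=> /andP[sg1 sg2] t10 t12; split; last first.
  by move=> t _; rewrite /ctl; case: ifP => _; [|case: ifP => _]; apply/andP; split; lra.
apply: pc_of => T; pose M := Num.max T t2 + 1.
have m1 : T <= Num.max T t2 by rewrite le_max lexx.
have m2 : t2 <= Num.max T t2 by rewrite le_max lexx orbT.
have TM : T <= M by rewrite /M; lra.
have t2M : t2 < M by rewrite /M; lra.
case: (ltgtP 0 t1) t10 => [t1p _|//|t10 _].
- case: (ltgtP t1 t2) t12 => [t12 _|//|t12 _].
  + exists 3%N, (fun i => nth M [:: 0; t1; t2] i), (fun i => nth 0 [:: - sg; sg] i).
    split => //.
    * by case=> [|[|[|i]]] //= _; lra.
    * case=> [|[|[|i]]] //= _ s /andP[h1 h2]; rewrite /ctl.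
      - by case: leP => ?; [|case: leP => ?]; lra.
      - by case: leP => ?; [|case: leP => ?]; lra.
      - by case: leP => ?; [|case: leP => ?]; lra.
  + exists 2%N, (fun i => nth M [:: 0; t1] i), (fun i => nth 0 [:: - sg; 0] i).
    split => //.
    * by case=> [|[|i]] //= _; lra.
    * case=> [|[|i]] //= _ s /andP[h1 h2]; rewrite /ctl.
      - by case: leP => ?; [|case: leP => ?]; lra.
      - by case: leP => ?; [|case: leP => ?]; lra.
- case: (ltgtP t1 t2) t12 => [t12 _|//|t12 _].
  + exists 2%N, (fun i => nth M [:: 0; t2] i), (fun i => nth 0 [:: sg; 0] i).
    split => //.
    * by case=> [|[|i]] //= _; lra.
    * case=> [|[|i]] //= _ s /andP[h1 h2]; rewrite /ctl.
      - by case: leP => ?; [|case: leP => ?]; lra.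
      - by case: leP => ?; [|case: leP => ?]; lra.
  + exists 1%N, (fun i => nth M [:: 0] i), (fun i => 0).
    split => //.
    * by case=> [|i] //= _; lra.
    * case=> [|i] //= _ s /andP[h1 h2]; rewrite /ctl.
      by rewrite ifF ?ifF //; apply/negbTE; rewrite -ltNge //; lra.
Qed.
End S1.

Section S2.
Context {R : realType}.
Notation mu := (@lebesgue_measure R).

Lemma split0 (f : R -> R) (s y : R) : mu.-integrable `[0, s] (EFin \o f) -> 0 <= y -> y <= s ->
  \int[mu]_(r in `[0, s]) f r = \int[mu]_(r in `[0, y]) f r + \int[mu]_(r in `]y, s]) f r.
Proof.
move=> fi y0 ys; rewrite -(Rintegral_itvB fi) ?bnd_simp //; ring.
Qed.

Lemma oc_int (f : R -> R) (s y : R) : mu.-integrable `[0, s] (EFin \o f) -> 0 <= y ->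
  mu.-integrable `]y, s] (EFin \o f).
Proof.
move=> fi y0; apply: integrableS fi => //.
by move=> r /=; rewrite !in_itv/= => /andP[h1 ->]; rewrite andbT; exact: le_trans (ltW h1).
Qed.

Lemma oc_cc_int (f : R -> R) (s y : R) : mu.-integrable `[0, s] (EFin \o f) -> 0 <= y ->
  mu.-integrable `[y, s] (EFin \o f).
Proof.
move=> fi y0; apply: integrableS fi => //.
by move=> r /=; rewrite !in_itv/= => /andP[h1 ->]; rewrite andbT; exact: le_trans h1.
Qed.

Variables (sg t1 t2 : R).
Hypotheses (hsg : -1 <= sg <= 1) (h1 : 0 <= t1) (h12 : t1 <= t2).
Let u := ctl sg t1 t2.
Let au : admissible u := ctl_adm hsg h1 h12.

Lemma I1 s : 0 <= s -> s <= t1 -> \int[mu]_(r in `[0, s]) u r = - sg * s.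
Proof.
move=> s0 st; rewrite (@eq_Rintegral _ _ _ _ _ (fun _ => - sg)).
  by rewrite Rintegral_cst// mu_cc// subr0.
by move=> r; rewrite inE/= in_itv/= => /andP[_ rs]; rewrite /u /ctl ifT//; exact: le_trans rs st.
Qed.

Lemma I2 s : t1 <= s -> s <= t2 -> \int[mu]_(r in `[0, s]) u r = - sg * t1 + sg * (s - t1).
Proof.
move=> st1 st2; rewrite (split0 (adm_int s au) h1 st1) I1 //; congr (_ + _).
rewrite (@eq_Rintegral _ _ _ _ _ (fun _ => sg)).
  by rewrite Rintegral_cst// mu_oc.
move=> r; rewrite inE/= in_itv/= => /andP[r1 rs]; rewrite /u /ctl ifF ?ifT //.
  exact: le_trans rs st2.
by apply/negbTE; rewrite -ltNge.
Qed.

Lemma I3 s : t2 <= s -> \int[mu]_(r in `[0, s]) u r = - sg * t1 + sg * (t2 - t1).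
Proof.
move=> st2; rewrite (split0 (adm_int s au) (le_trans h1 h12) st2) I2 //.
rewrite (@eq_Rintegral _ _ _ _ _ (fun _ => 0)).
  by rewrite Rintegral_cst// mul0r addr0.
move=> r; rewrite inE/= in_itv/= => /andP[r1 rs]; rewrite /u /ctl ifF ?ifF //.
  by apply/negbTE; rewrite -ltNge.
by apply/negbTE; rewrite -ltNge; exact: le_lt_trans h12 r1.
Qed.

Lemma X1 (x : R * R) s : 0 <= s -> s <= t1 ->
  xi x u s = (x.1 + x.2 * s - sg * s ^+ 2 / 2, x.2 - sg * s).
Proof.
move=> s0 st; rewrite /xi /xi2 I1 //; congr (_, _); last by ring.
have -> : \int[mu]_(r in `[0, s]) xi2 x u r = \int[mu]_(r in `[0, s]) (x.2 + (- sg) * r).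
  apply: eq_Rintegral => r; rewrite inE/= in_itv/= => /andP[r0 rs]; rewrite /xi2 I1 //; last exact: le_trans rs st.
by rewrite int_lin //; ring.
Qed.

Lemma X3 (x : R * R) s : t2 <= s ->
  xi x u s = (x.1 + (x.2 * t1 - sg * t1 ^+ 2 / 2)
                   + ((x.2 - 2 * sg * t1) * (t2 - t1) + sg * (t2 ^+ 2 - t1 ^+ 2) / 2)
                   + (x.2 - 2 * sg * t1 + sg * t2) * (s - t2),
              x.2 - 2 * sg * t1 + sg * t2).
Proof.
move=> st2; have t20 : 0 <= t2 by exact: le_trans h12.
have s0 : 0 <= s by exact: le_trans st2.
rewrite /xi /xi2 I3 //; congr (_, _); last by ring.
have fi := @xi2_int _ x u s au s0.
rewrite (split0 fi t20 st2).
have fi2 := @xi2_int _ x u t2 au t20.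
rewrite (split0 fi2 h1 h12).
rewrite Rintegral_itv_obnd_cbnd; last exact: oc_int.
have -> : \int[mu]_(r in `[0, t1]) xi2 x u r = \int[mu]_(r in `[0, t1]) (x.2 + (- sg) * r).
  apply: eq_Rintegral => r; rewrite inE/= in_itv/= => /andP[r0 rs]; rewrite /xi2 I1 //; ring.
have -> : \int[mu]_(r in `[t1, t2]) xi2 x u r = \int[mu]_(r in `[t1, t2]) ((x.2 - 2 * sg * t1) + sg * r).
  apply: eq_Rintegral => r; rewrite inE/= in_itv/= => /andP[r0 rs]; rewrite /xi2 I2 //; ring.
have -> : \int[mu]_(r in `]t2, s]) xi2 x u r = \int[mu]_(r in `]t2, s]) (x.2 - 2 * sg * t1 + sg * t2).
  apply: eq_Rintegral => r; rewrite inE/= in_itv/= => /andP[r0 rs]; rewrite /xi2 I3 //; last exact: ltW.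
  ring.
rewrite !int_lin // Rintegral_cst // mu_oc //; ring.
Qed.
End S2.

Section S3.
Context {R : realType}.
Notation mu := (@lebesgue_measure R).

Lemma rec_sg (sg a b : R) : (sg = 1 \/ sg = -1) -> 0 <= sg * b ->
  -1 <= a <= 1 -> -1 <= b <= 1 ->
  exists u, admissible u /\
    forall t, 0 <= t -> exists t', t <= t' <= t + 2 /\ Qsq (xi (a, b) u t').
Proof.
move=> hs sb /andP[a1 a2] /andP[b1 b2].
have hsg : -1 <= sg <= 1 by case: hs => ->; apply/andP; split; lra.
have ss : sg * sg = 1 by case: hs => ->; ring.
set be := sg * b; set al := sg * a.
have be1 : be <= 1 by rewrite /be; case: hs => ->; lra.
have al1 : -1 <= al <= 1 by rewrite /al; case: hs => ->; apply/andP; split; lra.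
case/andP: al1 => al1 al2.
have ea : a = sg * al by rewrite /al mulrA ss mul1r.
have eb : b = sg * be by rewrite /be mulrA ss mul1r.
have be0 : 0 <= be by [].
clearbody al be.
have [caseA|caseB] := leP (al + be ^+ 2 / 2) 1.
- exists (ctl sg be be); split; first exact: ctl_adm.
  have QX : forall s, be <= s -> Qsq (xi (a, b) (ctl sg be be) s).
    move=> s bs; rewrite (X3 hsg be0 (lexx be)) //= /Qsq /=.
    rewrite ea eb; case: hs => -> ; split; apply/andP; split; nra.
  move=> t t0; have [tb|bt] := leP t be.
    by exists be; split; [apply/andP; split; lra|exact: QX].
  by exists t; split; [apply/andP; split; lra|apply: QX; exact: ltW].
- have bp : 0 <= be + 1 by lra.
  exists (ctl sg (be + 1) (be + 2)); split; first by apply: ctl_adm => //; lra.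
  set D := be ^+ 2 + 2 * al - 2.
  have D0 : 0 <= D by rewrite /D; lra.
  set q := Num.sqrt D.
  have q0 : 0 <= q by exact: sqrtr_ge0.
  have qq : q ^+ 2 = D by rewrite /q sqr_sqrtr.
  have D1 : D <= 1 by rewrite /D; nra.
  have eD : D = be ^+ 2 + 2 * al - 2 by [].
  clearbody q D.
  have q1 : q <= 1 by nra.
  have QX3 : forall s, be + 2 <= s -> Qsq (xi (a, b) (ctl sg (be + 1) (be + 2)) s).
    move=> s bs; rewrite (X3 hsg bp (_ : be + 1 <= be + 2)) //=; last lra.
    rewrite /Qsq /= ea eb; case: hs => -> ; split; apply/andP; split; nra.
  have QX1 : Qsq (xi (a, b) (ctl sg (be + 1) (be + 2)) (be + q)).
    rewrite (X1 sg (be + 2) (a, b) (_ : 0 <= be + q) (_ : be + q <= be + 1)) /=; [|lra|lra].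
    rewrite /Qsq /= ea eb; case: hs => -> ; split; apply/andP; split; nra.
  move=> t t0; have [tb|bt] := leP t (be + q).
    by exists (be + q); split; [apply/andP; split; nra|exact: QX1].
  have [tb2|bt2] := leP t (be + 2).
    by exists (be + 2); split; [apply/andP; split; nra|apply: QX3; lra].
  by exists t; split; [apply/andP; split; lra|apply: QX3; lra].
Qed.

Lemma rec2 : controlled_recurrent 2 (@Qsq R).
Proof.
move=> [a b] [ha hb]; have [b0|b0] := leP 0 b.
  by apply: (@rec_sg 1) => //; [left|lra].
by apply: (@rec_sg (-1)) => //; [right|lra].
Qed.
End S3.

Section S4.
Context {R : realType}.
Notation mu := (@lebesgue_measure R).

Lemma Q11 : @Qsq R (1, 1).
Proof. by rewrite /Qsq /=; split; apply/andP; split; lra. Qed.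

Lemma far (z : R * R) (eps c : R) : eps < c -> 1 + c <= z.1 -> ~ Neps eps (@Qsq R) z.
Proof.
move=> ec zc [y [/andP[_ y1] _]]; rewrite ge_max => /andP[h _].
move: h; rewrite ler_norml => /andP[h1 h2]; lra.
Qed.

Lemma not_inv : ~ controlled_invariant (@Qsq R).
Proof.
move=> /(_ (1, 1) Q11) [u [au H]].
have := H 1 ler01; have := xi1_lb (1, 1) au ler01; rewrite /Qsq /=.
move=> h [/andP[_ h2] _]; lra.
Qed.

Lemma not_rec tau : 0 < tau < 2 -> ~ controlled_recurrent tau (@Qsq R).
Proof.
move=> /andP[t0 t2] /(_ (1, 1) Q11) [u [au H]].
have h0 : 0 <= 1 - tau / 2 by lra.
have [t' [/andP[h1 h2] Q']] := H _ h0.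
have t'0 : 0 <= t' by lra.
have := xi1_lb (1, 1) au t'0; move: Q'; rewrite /Qsq /= => [[/andP[_ q] _]].
move=> h; nra.
Qed.

Lemma r_inv_oo (eps T : R) : 0 < eps < 1 / 2 -> 1 <= T -> r_inv T eps (@Qsq R) = +oo%E.
Proof.
move=> /andP[e0 e1] T1; apply/eqP; rewrite eq_le leey /=.
apply: le_ereal_inf_tmp => _ [n [F [aF cov]] <-]; exfalso.
have [i ni Hi] := cov _ Q11.
have h1T : (0:R) <= 1 <= T by rewrite ler01 T1.
have := xi1_lb (1, 1) (aF i ni) ler01 => /= h.
apply: (@far _ eps (1 / 2) _ _ (Hi 1 h1T)); [exact: e1|rewrite /xi /=; rewrite expr1n mulr1 in h; lra].
Qed.

Lemma r_rec_oo (eps T tau : R) : 0 < tau < 2 -> 0 < eps -> eps < (1 - tau ^+ 2 / 4) / 2 -> 2 <= T ->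
  r_rec T eps tau (@Qsq R) = +oo%E.
Proof.
move=> /andP[t0 t2] e0 e1 T1; apply/eqP; rewrite eq_le leey /=.
apply: le_ereal_inf_tmp => _ [n [F [aF cov]] <-]; exfalso.
have [i ni Hi] := cov _ Q11.
have h0 : 0 <= 1 - tau / 2 <= T - tau by apply/andP; split; lra.
have [t' [/andP[h1 h2] Nt]] := Hi _ h0.
have t'0 : 0 <= t' by lra.
have := xi1_lb (1, 1) (aF i ni) t'0 => /= h.
apply: (@far _ eps ((1 - tau ^+ 2 / 4) / 2) _ _ Nt) => //=; nra.
Qed.
End S4.

Section S5.
Context {R : realType}.

Lemma big_pt (M T0 : R) : exists x : R, [/\ M < x, T0 <= x & 1 <= x].
Proof.
exists (Num.max M (Num.max T0 1) + 1).
have h1 : M <= Num.max M (Num.max T0 1) by rewrite le_max lexx.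
have h2 : T0 <= Num.max M (Num.max T0 1) by rewrite !le_max lexx orbT.
have h3 : 1 <= Num.max M (Num.max T0 1) by rewrite !le_max lexx !orbT.
split; lra.
Qed.

Lemma esup_oo (g : R -> \bar R) (T0 : R) : (forall T, T0 <= T -> g T = +oo%E) ->
  limf_esup g (pinfty_nbhs R) = +oo%E.
Proof.
move=> H; rewrite limf_esupE; apply/eqP; rewrite eq_le leey /=.
apply: le_ereal_inf_tmp => _ [V [M [Mr HM]] <-].
have [x [Mx Tx _]] := big_pt M T0.
apply: le_ereal_sup_tmp; exists (g x); first by exists x => //; exact: HM.
by rewrite H.
Qed.

Lemma esup_0 (g : R -> \bar R) : (forall T, 1 <= T -> (0 <= g T)%E) ->
  (forall e : R, 0 < e -> exists T0 : R, forall T, T0 <= T -> (g T <= e%:E)%E) ->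
  limf_esup g (pinfty_nbhs R) = 0%E.
Proof.
move=> g0 ge; rewrite limf_esupE; apply/eqP; rewrite eq_le; apply/andP; split.
  apply/lee_addgt0Pr => e e0; rewrite add0e.
  have [T0 HT0] := ge e e0.
  apply: ge_ereal_inf; exists (ereal_sup (g @` [set T | T0 < T])).
    exists [set T | T0 < T] => //; exists T0; split; first exact: num_real.
    by move=> x.
  apply: ge_ereal_sup => _ [T /= TT <-]; apply: HT0; exact: ltW.
apply: le_ereal_inf_tmp => _ [V [M [Mr HM]] <-].
have [x [Mx _ x1]] := big_pt M 0.
apply: le_ereal_sup_tmp; exists (g x); first by exists x => //; exact: HM.
exact: g0.
Qed.

Lemma ent_cst (r : R -> R -> \bar R) (e0 : R) (c : \bar R) : 0 < e0 ->
  (forall eps, 0 < eps < e0 -> limf_esup (fun T : R => ((T^-1)%:E * elog2 (r T eps))%E) (pinfty_nbhs R) = c) ->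
  entropy_of r = c.
Proof.
move=> e00 H; rewrite /entropy_of; apply: lim_near_cst; first exact: ereal_hausdorff.
exists e0 => //= eps; rewrite /ball /= sub0r normrN => hb hp.
apply: H; rewrite hp /=; move: hb; rewrite gtr0_norm //.
Qed.

Lemma ent_oo (r : R -> R -> \bar R) (e0 T0 : R) : 0 < e0 ->
  (forall eps T, 0 < eps < e0 -> T0 <= T -> r T eps = +oo%E) -> entropy_of r = +oo%E.
Proof.
move=> e00 H; apply: (ent_cst e00) => eps he.
apply: (@esup_oo _ (Num.max T0 1)) => T hT.
have h1 : T0 <= T by move: hT; rewrite ge_max => /andP[].
have h2 : 1 <= T by move: hT; rewrite ge_max => /andP[].
rewrite H //= muleC gt0_mulye // lte_fin invr_gt0; lra.
Qed.
End S5.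

Section S6.
Context {R : realType}.

Lemma ln_le_sub1 (y : R) : 0 < y -> ln y <= y - 1.
Proof.
move=> y0; have h : -1 < y - 1 by lra.
by have := @le_ln1Dx R (y - 1) h; rewrite addrC subrK.
Qed.

Lemma ln_bound (C e : R) : 0 < C -> 0 < e -> exists T0 : R, 1 <= T0 /\
  forall T N : R, T0 <= T -> 1 <= N -> N <= (C * T) ^+ 2 -> T^-1 * (ln N / ln 2) <= e.
Proof.
move=> C0 e0; set L := ln (2 : R).
have L0 : 0 < L by rewrite /L ln_gt0 // ltr1n.
set a := 4 * C / (e * L).
have a0 : 0 < a by rewrite /a divr_gt0 // ?mulr_gt0.
set b := 4 * `|ln a| / (e * L).
have b0 : 0 <= b by rewrite /b divr_ge0 // ?mulr_ge0 // ltW // mulr_gt0.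
exists (Num.max 1 b); split; first by rewrite le_max lexx.
move=> T N; rewrite ge_max => /andP[T1 bT] N1 NC.
have T0 : 0 < T by lra.
have CT0 : 0 < C * T by rewrite mulr_gt0.
have lnN : ln N <= 2 * ln (C * T).
  rewrite -[2]/(1 + 1) mulrDl mul1r -mulr2n -lnXn //.
  by rewrite ler_ln // posrE ?exprn_gt0 //; lra.
have eCT : C * T = a * (C * T / a) by field; lra.
have lnCT : ln (C * T) <= ln a + (C * T / a - 1).
  have -> : ln (C * T) = ln a + ln (C * T / a).
    have hp : 0 < C * T / a by rewrite divr_gt0. by rewrite -lnM ?posrE // [a * _]mulrC divfK // gt_eqF.
  rewrite lerD2l.
  by apply: ln_le_sub1; rewrite divr_gt0.
have CTa : C * T / a = T * (e * L) / 4 by rewrite /a; field; rewrite (gt_eqF L0) (gt_eqF e0) (gt_eqF C0).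
have hb : 4 * `|ln a| <= T * (e * L).
  by move: bT; rewrite /b ler_pdivrMr // mulr_gt0.
have hla : ln a <= `|ln a| by exact: ler_norm.
rewrite mulrC ler_pdivrMr // ler_pdivrMr //.

nra.
Qed.
End S6.

Section S7.
Context {R : realType}.

Definition ptf (m j : nat) : R := -1 + j%:R / m%:R.

Lemma pt_in (m j : nat) : (0 < m)%N -> (j <= 2 * m)%N -> -1 <= ptf m j <= 1.
Proof.
rewrite /ptf.
move=> m0 jm; have M0 : 0 < m%:R :> R by rewrite ltr0n.
have h1 : 0 <= j%:R / m%:R :> R by rewrite divr_ge0.
have hj : (j%:R : R) <= (2 * m)%:R by rewrite ler_nat.
rewrite natrM in hj.
have h2 : j%:R / m%:R <= 2 :> R by rewrite ler_pdivrMr //.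
apply/andP; split; lra.
Qed.

Lemma grid (m : nat) (y : R) : (0 < m)%N -> -1 <= y <= 1 ->
  exists j : nat, [/\ (j <= 2 * m)%N, 0 <= y - ptf m j & (y - ptf m j) * m%:R < 1].
Proof.
move=> m0 /andP[y1 y2]; have M0 : 0 < m%:R :> R by rewrite ltr0n.
have p0 : 0 <= (y + 1) * m%:R by rewrite mulr_ge0 //; lra.
have /andP[t1 t2] := Num.Theory.truncn_itv p0.
set j := Num.truncn _ in t1 t2.
have e : (y - (-1 + j%:R / m%:R)) * m%:R = (y + 1) * m%:R - j%:R.
  by field; rewrite gt_eqF.
exists j; rewrite /ptf; split.
- rewrite -(ler_nat R) natrM; apply: le_trans t1 _; nra.
- by rewrite -(pmulr_rge0 _ M0) mulrC e; lra.
- by rewrite e; rewrite -natr1 in t2; lra.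
Qed.

Lemma r_rec_fin (eps T tau : R) : 0 < eps -> 1 <= T -> 2 <= tau ->
  exists N : R, [/\ 1 <= N, N <= ((4 / eps + 3) * T) ^+ 2 & r_rec T eps tau (@Qsq R) = N%:E].
Proof.
move=> e0 T1 t2.
have [G HG] : {G : R * R -> R -> R & forall p, Qsq p -> admissible (G p) /\
    (forall t, 0 <= t -> exists t', t <= t' <= t + 2 /\ Qsq (xi p (G p) t'))}.
  apply: (@choice (R * R) (R -> R) (fun p u => Qsq p -> admissible u /\
    (forall t, 0 <= t -> exists t', t <= t' <= t + 2 /\ Qsq (xi p u t')))) => p.
  have [Qp|nQp] := pselect (Qsq p); last by exists (fun _ => 0).
  have [u hu] := rec2 Qp; by exists u.
set m := (Num.truncn ((1 + T) / eps)).+1.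
have m0 : (0 < m)%N by [].
have p0 : 0 <= (1 + T) / eps by rewrite divr_ge0 //; lra.
have /andP[tr1 tr2] := Num.Theory.truncn_itv p0.
have M0 : 0 < m%:R :> R by rewrite ltr0n.
have hM : 1 + T < m%:R * eps by rewrite -ltr_pdivrMr.
set K := (2 * m).+1.
pose F := fun i : nat => G (ptf m (i %/ K), ptf m (i %% K)).
have QF : forall i, (i < K * K)%N -> Qsq (ptf m (i %/ K), ptf m (i %% K)).
  move=> i iK; have i1 : (i %/ K < K)%N by rewrite ltn_divLR.
  have i2 : (i %% K < K)%N by rewrite ltn_pmod.
  by split; apply: pt_in.
have covQ : forall x, Qsq x -> exists2 i, (i < K * K)%N & rec_traj T eps tau (@Qsq R) x (F i).
  move=> [x1 x2] [hx1 hx2].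
  have [j1 [j1m d1 d1M]] := grid m0 hx1.
  have [j2 [j2m d2 d2M]] := grid m0 hx2.
  have j2K : (j2 < K)%N by rewrite /K ltnS.
  have e1 : ((j1 * K + j2) %/ K = j1)%N by rewrite divnMDl // divn_small ?addn0.
  have e2 : ((j1 * K + j2) %% K = j2)%N by rewrite modnMDl modn_small.
  exists (j1 * K + j2)%N; first by rewrite -ltn_divLR // e1 /K ltnS.
  rewrite /F e1 e2; set p := (ptf m j1, ptf m j2).
  have Qp : Qsq p by split; apply: pt_in.
  have [au hrec] := HG p Qp.
  move=> t /andP[t0 tT].
  have [t' [/andP[h1 h2] Qt']] := hrec t t0.
  exists t'; split; first by apply/andP; split; lra.
  exists (xi p (G p) t') => //.
  have t'0 : 0 <= t' by lra.
  rewrite (@xi_shift _ (x1, x2) p _ t' au t'0) /=.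
  move: d1 d1M d2 d2M; rewrite /p /=.
  set a1 := x1 - ptf m j1; set a2 := x2 - ptf m j2 => d1 d1M d2 d2M.
  move: hM d1M d2M; set MM := m%:R => hM d1M d2M.
  have k1 : a2 * MM * t' <= t' by nra.
  have k2 : (a1 + a2 * t') * MM < eps * MM by nra.
  have k3 : a1 + a2 * t' < eps by rewrite -(ltr_pM2r M0).
  have k4 : a2 < eps by nra.
  have k5 : 0 <= a2 * t' by nra.
  rewrite ge_max; apply/andP; split; rewrite ler_norml; apply/andP; split; lra.
have up : (r_rec T eps tau (@Qsq R) <= ((K * K)%N)%:R%:E)%E.
  apply: ge_ereal_inf; exists (((K * K)%N)%:R%:E) => //; exists (K * K)%N => //.
  by exists F; split => // i iK; exact: (HG _ (QF i iK)).1.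
have Q00 : @Qsq R (0, 0) by split; rewrite /=; apply/andP; split; lra.
have lo : (1%E <= r_rec T eps tau (@Qsq R))%E.
  apply: le_ereal_inf_tmp => _ [n [F' [aF' cov']] <-].
  have [i ni _] := cov' _ Q00.
  by rewrite lee_fin ler1n; exact: leq_ltn_trans (leq0n i) ni.
have [NN eN] : exists NN : R, r_rec T eps tau (@Qsq R) = NN%:E.
  move: up lo; case: (r_rec T eps tau (@Qsq R)) => [x _ _|+ _|_ +]; [by exists x| |].
  - by rewrite leye_eq.
  - by rewrite leeNy_eq.
rewrite eN in up lo; exists NN; split; [by move: lo; rewrite lee_fin| |by []].
apply: le_trans; first by rewrite -lee_fin; exact: up.
have mle : m%:R <= (1 + T) / eps + 1 :> R by rewrite /m -natr1; lra.
have Kle : (K%:R : R) <= (4 / eps + 3) * T.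
  rewrite /K -natr1 natrM.
  have ie : (1 + T) / eps <= 2 / eps * T.
    rewrite mulrAC ler_pM2r ?invr_gt0 //; lra.
  have : 4 / eps * T = 2 * (2 / eps * T) by ring.
  lra.
have K0 : (0 : R) <= K%:R by [].
by rewrite natrM expr2; apply: ler_pM => //.
Qed.
End S7.


Section Final.
Context {R : realType}.

Lemma h_rec_le (tau : R) : 2 <= tau -> (h_rec tau (@Qsq R) <= (2 / ln 2)%:E)%E.
Proof.
move=> htau.
have L0 : (0 : R) < ln 2 by rewrite ln_gt0 // ltr1n.
have -> : h_rec tau (@Qsq R) = 0%E.
  rewrite /h_rec; apply: (@ent_cst _ _ 1 0%E) => // eps /andP[e0 e1].
  apply: esup_0.
  - move=> T T1; have [N [N1 _ ->]] := r_rec_fin e0 T1 htau.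
    rewrite /elog2 -EFinM lee_fin; apply: mulr_ge0.
      by rewrite invr_ge0; lra.
    by apply: divr_ge0; [exact: ln_ge0|exact: ltW].
  - move=> e ep.
    have C1 : 0 < 4 / eps by rewrite divr_gt0.
    have C0 : 0 < 4 / eps + 3 by lra.
    have [T0 [T01 HT0]] := ln_bound C0 ep.
    exists T0 => T hT; have T1 : 1 <= T by lra.
    have [N [N1 N2 ->]] := r_rec_fin e0 T1 htau.
    by rewrite /elog2 -EFinM lee_fin; apply: HT0.
by rewrite lee_fin divr_ge0 // ltW.
Qed.
End Final.

Unset Implicit Arguments.

Theorem mainTheorem6 (R : realType) :
  (~ controlled_invariant (@Qsq R)) /\
      (forall tau : R, 0 < tau < 2 -> ~ controlled_recurrent tau (@Qsq R)) /\
      h_inv (@Qsq R) = +oo%E /\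
      (forall tau : R, 0 < tau < 2 -> h_rec tau (@Qsq R) = +oo%E) /\
      controlled_recurrent 2 (@Qsq R) /\
      (forall tau : R, 2 <= tau -> (h_rec tau (@Qsq R) <= (2 / ln 2)%:E)%E).
Proof.
split; first exact: not_inv.
split; first exact: not_rec.
split.
  rewrite /h_inv; apply: (@ent_oo _ _ (1 / 2) 1) => [|eps T he T1]; first lra.
  exact: r_inv_oo.
split.
  move=> tau /andP[t0 t2].
  have c0 : 0 < (1 - tau ^+ 2 / 4) / 2 by nra.
  rewrite /h_rec; apply: (@ent_oo _ _ _ 2 c0) => eps T /andP[e0 e1] T2.
  by apply: r_rec_oo => //; apply/andP; split.
split; first exact: rec2.
exact: h_rec_le.
Qed.
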